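(* In the multi-parameter setting described in the context, for every $\theta\in\Theta$, $$(C_\Upsilon)_{kl}=\sum_{i:p_i>0}\frac{1}{p_i}\frac{\partial p_i}{\partial\theta^k}\frac{\partial p_i}{\partial\theta^l}+4\,\mathrm{Re}\sum_{i<j}(p_i+p_j)\langle w_i^{(k)}|w_j\rangle\langle w_j|w_i^{(l)}\rangle+4\sum_{i:p_i>0}p_i\langle w_i^{(k)}|w_i\rangle\langle w_i|w_i^{(l)}\rangle,$$ where $|w_i^{(k)}\rangle=\partial|w_i\rangle/\partial\theta^k$.
   Context: Let $\Theta\subseteq\mathbb{R}^p$ be open and $D\ge1$. For $\theta\in\Theta$ let $\Phi_\theta$ be a quantum channel on $D\times D$ complex matrices and $\rho_0=|\psi_0\rangle\langle\psi_0|$ a fixed pure input state. Canonical Kraus operators are $D\times D$ matrices $\Upsilon_1(\theta),\dots,\Upsilon_D(\theta)$, differentiable in $\theta$, with $\sum_k\Upsilon_k^\dagger\Upsilon_k=\mathbb{I}$, $\Phi_\theta(\rho)=\sum_k\Upsilon_k\rho\Upsilon_k^\dagger$, and $\mathrm{tr}\{\Upsilon_k\rho_0\Upsilon_j^\dagger\}=\delta_{jk}p_k(\theta)$. Write $\Upsilon_k(\theta)|\psi_0\rangle=\sqrt{p_k(\theta)}|w_k(\theta)\rangle$ with $\{|w_k(\theta)\rangle\}$ an orthonormal basis of $\mathbb{C}^D$ differentiable in $\theta$. Each $p_k$ is assumed either identically zero or strictly positive on $\Theta$. The multi-parameter Sarovar–Milburn bound is the $p\times p$ matrix $(C_\Upsilon)_{kl}=4\sum_i\mathrm{Re}\,\mathrm{tr}\{\frac{\partial\Upsilon_i}{\partial\theta^k}\rho_0(\frac{\partial\Upsilon_i}{\partial\theta^l})^\dagger\}$.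 *)

(* Defs.v *)
From HB Require Import structures.
From mathcomp Require Import all_boot all_order all_algebra.
From mathcomp Require Import all_classical all_reals all_analysis.
From mathcomp Require Import complex.
Set Implicit Arguments.
Unset Strict Implicit.
Unset Printing Implicit Defensive.
Import Order.TTheory GRing.Theory Num.Theory.
Import numFieldNormedType.Exports.
Local Open Scope ring_scope.
Local Open Scope complex_scope.

(* Conventions: parameters theta live in 'rV[R]_p (R a realType); complex
   numbers are R[i] (mathcomp-real-closed); complex-valued functions are
   differentiated componentwise (real and imaginary parts). *)

Section Defs.
Variables (R : realType) (p : nat).

Definition ebase (k : 'I_p) : 'rV[R]_p := delta_mx 0 k.

Definition rpartial (k : 'I_p) (f : 'rV[R]_p -> R) (th : 'rV[R]_p) : R :=
  'D_(ebase k) f th.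

Definition cpartial (k : 'I_p) (f : 'rV[R]_p -> R[i]) (th : 'rV[R]_p) : R[i] :=
  rpartial k (fun x => complex.Re (f x)) th +i* rpartial k (fun x => complex.Im (f x)) th.

Definition mxpartial m n (k : 'I_p) (F : 'rV[R]_p -> 'M[R[i]]_(m, n))
  (th : 'rV[R]_p) : 'M[R[i]]_(m, n) :=
  \matrix_(a, b) cpartial k (fun x => F x a b) th.

Definition mxdifferentiable m n (F : 'rV[R]_p -> 'M[R[i]]_(m, n))
  (th : 'rV[R]_p) : Prop :=
  forall a b, differentiable (fun x => complex.Re (F x a b)) th /\
              differentiable (fun x => complex.Im (F x a b)) th.
End Defs.

Definition adjmx (R : rcfType) m n (A : 'M[R[i]]_(m, n)) : 'M[R[i]]_(n, m) :=
  (map_mx (@conjc R) A)^T.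

Definition cinner (R : rcfType) n (u v : 'cV[R[i]]_n) : R[i] :=
  \sum_(a < n) (u a 0)^* * v a 0.

(* Main.v *)
Require Import Defs.
From HB Require Import structures.
From mathcomp Require Import all_boot all_order all_algebra.
From mathcomp Require Import all_classical all_reals all_analysis.
From mathcomp Require Import complex.
From mathcomp Require Import ring lra.
Import Order.TTheory GRing.Theory Num.Theory.
Import numFieldNormedType.Exports.
Local Open Scope ring_scope.
Local Open Scope complex_scope.

Local Notation cRe := (@complex.Re _).
Local Notation cIm := (@complex.Im _).
Section S.
Variables (R : realType) (V : normedModType R) (th v : V).
Implicit Types f g : V -> R.
Implicit Types F G : V -> R[i].

Lemma rdD {f g} : derivable f th v -> derivable g th v ->
  derivable (fun x => f x + g x) th v /\
  'D_v (fun x => f x + g x) th = 'D_v f th + 'D_v g th.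
Proof. move=> hf hg; split; [exact: derivableD|exact: deriveD]. Qed.
Lemma rdM {f g} : derivable f th v -> derivable g th v ->
  derivable (fun x => f x * g x) th v /\
  'D_v (fun x => f x * g x) th = f th * 'D_v g th + g th * 'D_v f th.
Proof. move=> hf hg; split; [exact: derivableM|exact: deriveM]. Qed.
Lemma rdN {f} : derivable f th v ->
  derivable (fun x => - f x) th v /\
  'D_v (fun x => - f x) th = - 'D_v f th.
Proof. move=> hf; split; [exact: derivableN|exact: deriveN]. Qed.
Lemma rdE {f g} : f = g -> derivable f th v -> derivable g th v /\ 'D_v g th = 'D_v f th.
Proof. by move=> <-. Qed.
Lemma rdC (c : R) : derivable (fun x => c) th v /\ 'D_v (fun x => c) th = 0.
Proof. split; [exact: derivable_cst|exact: derive_cst]. Qed.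

Lemma ReD (x y : R[i]) : cRe (x + y) = cRe x + cRe y. Proof. by case: x => a b; case: y => c d. Qed.
Lemma ImD (x y : R[i]) : cIm (x + y) = cIm x + cIm y. Proof. by case: x => a b; case: y => c d. Qed.
Lemma ReM (x y : R[i]) : cRe (x * y) = cRe x * cRe y - cIm x * cIm y. Proof. by case: x => a b; case: y => c d. Qed.
Lemma ImM (x y : R[i]) : cIm (x * y) = cRe x * cIm y + cIm x * cRe y. Proof. by case: x => a b; case: y => c d. Qed.
Lemma ReJ (x : R[i]) : cRe (x^*%R) = cRe x. Proof. by case: x. Qed.
Lemma ImJ (x : R[i]) : cIm (x^*%R) = - cIm x. Proof. by case: x. Qed.
Lemma ReN (x : R[i]) : cRe (- x) = - cRe x. Proof. by case: x. Qed.
Lemma ImN (x : R[i]) : cIm (- x) = - cIm x. Proof. by case: x. Qed.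
Lemma cplxP (x y : R[i]) : cRe x = cRe y -> cIm x = cIm y -> x = y.
Proof. case: x => a b; case: y => c d /= -> ->; done. Qed.

Definition cd F := derivable (fun x => cRe (F x)) th v /\ derivable (fun x => cIm (F x)) th v.
Definition cD F := 'D_v (fun x => cRe (F x)) th +i* 'D_v (fun x => cIm (F x)) th.

Lemma cdD {F G} : cd F -> cd G -> cd (fun x => F x + G x) /\
  cD (fun x => F x + G x) = cD F + cD G.
Proof.
move=> [f1 f2] [g1 g2].
have e1 : (fun x => cRe (F x + G x)) = (fun x => cRe (F x) + cRe (G x)) by apply: funext => x; rewrite ReD.
have e2 : (fun x => cIm (F x + G x)) = (fun x => cIm (F x) + cIm (G x)) by apply: funext => x; rewrite ImD.
have [h1 h2] := rdD f1 g1; have [h3 h4] := rdD f2 g2.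
have [k1 k2] := rdE (esym e1) h1; have [k3 k4] := rdE (esym e2) h3.
rewrite /cd /cD k2 k4 h2 h4; split => //.
Qed.

Lemma cdN {F} : cd F -> cd (fun x => - F x) /\ cD (fun x => - F x) = - cD F.
Proof.
move=> [f1 f2].
have e1 : (fun x => cRe (- F x)) = (fun x => - cRe (F x)) by apply: funext => x; rewrite ReN.
have e2 : (fun x => cIm (- F x)) = (fun x => - cIm (F x)) by apply: funext => x; rewrite ImN.
have [h1 h2] := rdN f1; have [h3 h4] := rdN f2.
have [k1 k2] := rdE (esym e1) h1; have [k3 k4] := rdE (esym e2) h3.
by rewrite /cd /cD k2 k4 h2 h4.
Qed.

Lemma cdJ {F} : cd F -> cd (fun x => (F x)^*%R) /\ cD (fun x => (F x)^*%R) = (cD F)^*%R.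
Proof.
move=> [f1 f2].
have e1 : (fun x => cRe ((F x)^*%R)) = (fun x => cRe (F x)) by apply: funext => x; rewrite ReJ.
have e2 : (fun x => cIm ((F x)^*%R)) = (fun x => - cIm (F x)) by apply: funext => x; rewrite ImJ.
have [h3 h4] := rdN f2.
have [k1 k2] := rdE (esym e1) f1; have [k3 k4] := rdE (esym e2) h3.
by rewrite /cd /cD k2 k4 h4.
Qed.

Lemma cdM {F G} : cd F -> cd G -> cd (fun x => F x * G x) /\
  cD (fun x => F x * G x) = cD F * G th + F th * cD G.
Proof.
move=> [f1 f2] [g1 g2].
have e1 : (fun x => cRe (F x * G x)) = (fun x => cRe (F x) * cRe (G x) + - (cIm (F x) * cIm (G x))) by apply: funext => x; rewrite ReM.
have e2 : (fun x => cIm (F x * G x)) = (fun x => cRe (F x) * cIm (G x) + cIm (F x) * cRe (G x)) by apply: funext => x; rewrite ImM.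
have [a1 a2] := rdM f1 g1; have [b1 b2] := rdM f2 g2.
have [c1 c2] := rdN b1.
have [d1 d2] := rdD a1 c1.
have [a3 a4] := rdM f1 g2; have [b3 b4] := rdM f2 g1.
have [d3 d4] := rdD a3 b3.
have [k1 k2] := rdE (esym e1) d1; have [k3 k4] := rdE (esym e2) d3.
rewrite /cd /cD k2 k4 d2 d4 c2 a2 b2 a4 b4; split => //.
apply: cplxP; rewrite ?(ReD,ImD,ReM,ImM) /=; ring.
Qed.

Lemma cdC (c : R[i]) : cd (fun x => c) /\ cD (fun x => c) = 0.
Proof. by rewrite /cd /cD !derive_cst; split => //; split; apply: derivable_cst. Qed.

Lemma cdR {f} : derivable f th v -> cd (fun x => (f x)%:C) /\ cD (fun x => (f x)%:C) = ('D_v f th)%:C.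
Proof. by move=> hf; rewrite /cd /cD /= derive_cst; split => //; split => //; apply: derivable_cst. Qed.

Lemma cd_sum n (F : 'I_n -> V -> R[i]) : (forall i, cd (F i)) ->
  cd (fun x => \sum_(i < n) F i x) /\ cD (fun x => \sum_(i < n) F i x) = \sum_(i < n) cD (F i).
Proof.
elim: n F => [|n IH] F H.
  have -> : (fun x => \sum_(i < 0) F i x) = (fun x => 0 : R[i]) by apply: funext => x; rewrite big_ord0.
  by rewrite big_ord0; apply: cdC.
have -> : (fun x => \sum_(i < n.+1) F i x) = (fun x => \sum_(i < n) F (widen_ord (leqnSn n) i) x + F ord_max x).
  by apply: funext => x; rewrite big_ord_recr.
have [h1 h2] := IH (fun i => F (widen_ord (leqnSn n) i)) (fun i => H _).
have [h3 h4] := cdD h1 (H ord_max).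
by rewrite h4 h2 big_ord_recr.
Qed.

Lemma cd_near {F G} : (\forall x \near th, F x = G x) -> cd F -> cd G /\ cD G = cD F.
Proof.
move=> hn [f1 f2].
have n1 : \forall x \near th, cRe (F x) = cRe (G x) by apply: filterS hn => x ->.
have n2 : \forall x \near th, cIm (F x) = cIm (G x) by apply: filterS hn => x ->.
rewrite /cd /cD (near_eq_derive v n1) (near_eq_derive v n2); split => //.
split; [exact: near_eq_derivable f1 | exact: near_eq_derivable f2].
Qed.

Lemma cd_cinner n (f g : V -> 'cV[R[i]]_n) (df dg : 'cV[R[i]]_n) :
  (forall a, cd (fun x => f x a 0) /\ cD (fun x => f x a 0) = df a 0) ->
  (forall a, cd (fun x => g x a 0) /\ cD (fun x => g x a 0) = dg a 0) ->
  cd (fun x => cinner (f x) (g x)) /\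
  cD (fun x => cinner (f x) (g x)) = cinner df (g th) + cinner (f th) dg.
Proof.
move=> hf hg.
have h a : cd (fun x => (f x a 0)^*%R * g x a 0) /\
   cD (fun x => (f x a 0)^*%R * g x a 0) = (df a 0)^*%R * g th a 0 + (f th a 0)^*%R * dg a 0.
  have [f1 f2] := hf a; have [g1 g2] := hg a.
  have [j1 j2] := cdJ f1.
  have [m1 m2] := cdM j1 g1.
  by rewrite m2 j2 f2 g2.
have [s1 s2] := cd_sum _ (fun a x => (f x a 0)^*%R * g x a 0) (fun a => (h a).1).
rewrite /cinner; split; first exact: s1.
by rewrite s2 -big_split; apply: eq_bigr => a _; rewrite (h a).2.
Qed.
End S.
Arguments cd {R V} th v F.
Arguments cD {R V} th v F.
Arguments cdD {R V th v F G}.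
Arguments cdN {R V th v F}.
Arguments cdJ {R V th v F}.
Arguments cdM {R V th v F G}.
Arguments cdC {R V} th v c.
Arguments cdR {R V th v f}.
Arguments cd_sum {R V th v n} F.
Arguments cd_near {R V th v F G}.
Arguments cd_cinner {R V th v n f g df dg}.
Arguments rdM {R V th v f g}.

Section Alg.
Variable (R : realType).
Implicit Types (x y z : R[i]).

Lemma ReD' x y : cRe (x + y) = cRe x + cRe y. Proof. by case: x => a b; case: y => c d. Qed.
Lemma ImD' x y : cIm (x + y) = cIm x + cIm y. Proof. by case: x => a b; case: y => c d. Qed.
Lemma Re_sum n (P : pred 'I_n) (F : 'I_n -> R[i]) : cRe (\sum_(i < n | P i) F i) = \sum_(i < n | P i) cRe (F i).
Proof. exact: (big_morph _ ReD' (erefl _)). Qed.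
Lemma Im_sum n (P : pred 'I_n) (F : 'I_n -> R[i]) : cIm (\sum_(i < n | P i) F i) = \sum_(i < n | P i) cIm (F i).
Proof. exact: (big_morph _ ImD' (erefl _)). Qed.

Lemma cplxP' x y : cRe x = cRe y -> cIm x = cIm y -> x = y.
Proof. case: x => a b; case: y => c d /= -> ->; done. Qed.
Lemma cinnerDl n (a b c : 'cV[R[i]]_n) : cinner (a + b) c = cinner a c + cinner b c.
Proof. by rewrite /cinner -big_split; apply: eq_bigr => j _; rewrite mxE rmorphD mulrDl. Qed.
Lemma cinnerDr n (a b c : 'cV[R[i]]_n) : cinner c (a + b) = cinner c a + cinner c b.
Proof. by rewrite /cinner -big_split; apply: eq_bigr => j _; rewrite mxE mulrDr. Qed.
Lemma cinnerZl n (a b : 'cV[R[i]]_n) x : cinner (x *: a) b = x^*%R * cinner a b.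
Proof. by rewrite /cinner mulr_sumr; apply: eq_bigr => j _; rewrite mxE rmorphM mulrA. Qed.
Lemma cinnerZr n (a b : 'cV[R[i]]_n) x : cinner a (x *: b) = x * cinner a b.
Proof. by rewrite /cinner mulr_sumr; apply: eq_bigr => j _; rewrite mxE mulrCA. Qed.
Lemma cinnerJ n (a b : 'cV[R[i]]_n) : (cinner a b)^*%R = cinner b a.
Proof.
rewrite /cinner rmorph_sum; apply: eq_bigr => j _.
by case: (a j 0) => a1 a2; case: (b j 0) => b1 b2; apply: cplxP' => /=; ring.
Qed.

Lemma adjmxM m n q (A : 'M[R[i]]_(m, n)) (B : 'M[R[i]]_(n, q)) : adjmx (A *m B) = adjmx B *m adjmx A.
Proof. by rewrite /adjmx map_mxM trmx_mul. Qed.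

Lemma trace_rho n (A B : 'M[R[i]]_n) (psi : 'cV[R[i]]_n) :
  \tr (A *m (psi *m adjmx psi) *m adjmx B) = cinner (B *m psi) (A *m psi).
Proof.
rewrite mulmxA -mulmxA -adjmxM mxtrace_mulC /mxtrace big_ord1 mxE /cinner.
by apply: eq_bigr => j _; rewrite !mxE.
Qed.

Lemma parseval n (w : 'I_n -> 'cV[R[i]]_n) :
  (forall j k, cinner (w j) (w k) = (j == k)%:R) ->
  forall a b, cinner a b = \sum_(j < n) cinner a (w j) * cinner (w j) b.
Proof.
move=> hw a b.
pose M : 'M[R[i]]_n := \matrix_(c, j) w j c 0.
have h1 : adjmx M *m M = 1%:M.
  apply/matrixP => j k; rewrite !mxE -hw /cinner; apply: eq_bigr => c _.
  by rewrite !mxE.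
have h2 := mulmx1C h1.
have h3 c d : \sum_(j < n) w j c 0 * (w j d 0)^*%R = (c == d)%:R.
  move/matrixP: h2 => /(_ c d); rewrite !mxE => <-.
  by apply: eq_bigr => j _; rewrite !mxE.
rewrite /cinner.
transitivity (\sum_(c < n) \sum_(d < n) (a c 0)^*%R * ((c == d)%:R * b d 0)).
  apply: eq_bigr => c _; rewrite (bigD1 c) //= eqxx mul1r big1 ?addr0 //.
  by move=> d /negbTE; rewrite eq_sym => ->; rewrite mul0r mulr0.
transitivity (\sum_(c < n) \sum_(d < n) \sum_(j < n) (a c 0)^*%R * w j c 0 * ((w j d 0)^*%R * b d 0)).
  apply: eq_bigr => c _; apply: eq_bigr => d _; rewrite -h3 mulr_suml mulr_sumr.
  by apply: eq_bigr => j _; rewrite !mulrA.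
under eq_bigr do rewrite exchange_big /=.
rewrite exchange_big /=; apply: eq_bigr => j _; rewrite mulr_suml.
by apply: eq_bigr => c _; rewrite mulr_sumr.
Qed.

Lemma ReRM (a : R) y : cRe (a%:C * y) = a * cRe y. Proof. by case: y => c d /=; ring. Qed.
Lemma ImRM (a : R) y : cIm (a%:C * y) = a * cIm y. Proof. by case: y => c d /=; ring. Qed.
Lemma ReJ' y : cRe (y^*%R) = cRe y. Proof. by case: y. Qed.
Lemma ImJ' y : cIm (y^*%R) = - cIm y. Proof. by case: y. Qed.
Lemma ReJadd y : y^*%R + y = 0 -> cRe y = 0.
Proof. case: y => a b /= [] h _; lra. Qed.
Lemma ImJeq y : y^*%R = y -> cIm y = 0.
Proof. case: y => a b /= [] h; lra. Qed.
Lemma conjM' x y : (x * y)^*%R = x^*%R * y^*%R.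
Proof. by case: x => a b; case: y => c d; apply: cplxP' => /=; ring. Qed.

Lemma cjR (a : R) : (a%:C)^*%R = a%:C. Proof. by apply: cplxP' => /=; rewrite ?oppr0. Qed.

Lemma sym_split n (pp : 'I_n -> R) (z : 'I_n -> 'I_n -> R) :
  (forall i j, z j i = z i j) ->
  \sum_(i < n) pp i * \sum_(j < n) z i j =
  \sum_(i < n) pp i * z i i + \sum_(i < n) \sum_(j < n | (i < j)%N) (pp i + pp j) * z i j.
Proof.
move=> hz.
have e1 i : \sum_(j < n) z i j = z i i + \sum_(j < n | (i < j)%N) z i j + \sum_(j < n | (j < i)%N) z i j.
  rewrite (bigID (fun j : 'I_n => (i < j)%N)) /= [\sum_(j < n | ~~ _) _](bigD1 i) /= ?ltnn //.
  rewrite addrCA addrA; congr (_ + _); apply: eq_bigl => j.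
  rewrite -leqNgt leq_eqVlt; case: (eqVneq j i) => [->|ne] /=; first by rewrite andbF ltnn.
  by move: ne; rewrite -(inj_eq val_inj) andbT => /negbTE ->.
under eq_bigr do rewrite e1 !mulrDr.
rewrite !big_split /= -addrA; congr (_ + _).
have -> : \sum_(i < n) \sum_(j < n | (i < j)%N) (pp i + pp j) * z i j =
  \sum_(i < n) \sum_(j < n | (i < j)%N) pp i * z i j + \sum_(i < n) \sum_(j < n | (i < j)%N) pp j * z i j.
  by rewrite -big_split; apply: eq_bigr => i _; rewrite -big_split; apply: eq_bigr => j _; rewrite mulrDl.
congr (_ + _); first by apply: eq_bigr => i _; rewrite mulr_sumr.
under eq_bigr do rewrite mulr_sumr big_mkcond /=.
rewrite exchange_big /=; apply: eq_bigr => i _; rewrite big_mkcond /=.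
by rewrite [RHS]big_mkcond; apply: eq_bigr => j _; rewrite hz.
Qed.

Lemma core D (pp s ak al dpk dpl : 'I_D -> R) (W Xk Xl : 'I_D -> 'cV[R[i]]_D) :
  (forall i, 0 <= pp i) -> (forall i, s i * s i = pp i) ->
  (forall i, pp i = 0 -> ak i = 0 /\ al i = 0) ->
  (forall i, dpk i = 2 * s i * ak i) -> (forall i, dpl i = 2 * s i * al i) ->
  (forall j k, cinner (W j) (W k) = (j == k)%:R) ->
  (forall i j, cinner (Xk i) (W j) + cinner (W i) (Xk j) = 0) ->
  (forall i j, cinner (Xl i) (W j) + cinner (W i) (Xl j) = 0) ->
  ((4 : R) * \sum_(i < D) cRe (cinner ((al i)%:C *: W i + (s i)%:C *: Xl i)
                                      ((ak i)%:C *: W i + (s i)%:C *: Xk i)))%:C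
  = (\sum_(i < D | 0 < pp i) (pp i)^-1 * dpk i * dpl i)%:C
    + ((4 : R) * cRe (\sum_(i < D) \sum_(j < D | (i < j)%N)
          (pp i + pp j)%:C * cinner (Xk i) (W j) * cinner (W j) (Xl i)))%:C
    + 4%:R * \sum_(i < D | 0 < pp i)
          (pp i)%:C * cinner (Xk i) (W i) * cinner (W i) (Xl i).
Proof.
move=> hp hs h0 hdk hdl hW hEk hEl.
pose Z i j := cinner (Xk i) (W j) * cinner (W j) (Xl i).
have ZJ i j : Z j i = (Z i j)^*%R.
  rewrite /Z conjM' !cinnerJ.
  have e1 : cinner (Xk j) (W i) = - cinner (W j) (Xk i) by apply/eqP; rewrite -addr_eq0 hEk.
  have e2 : cinner (W i) (Xl j) = - cinner (Xl i) (W j) by apply/eqP; rewrite -addr_eq0 addrC hEl.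
  by rewrite e1 e2 mulrNN.
have ReZ i j : cRe (Z j i) = cRe (Z i j) by rewrite ZJ ReJ'.
have ImZ i : cIm (Z i i) = 0 by apply: ImJeq; rewrite -ZJ.
have Rk i : cRe (cinner (W i) (Xk i)) = 0.
  by apply: ReJadd; rewrite cinnerJ hEk.
have Rl i : cRe (cinner (Xl i) (W i)) = 0.
  by apply: ReJadd; rewrite cinnerJ addrC hEl.
have step1 i : cRe (cinner ((al i)%:C *: W i + (s i)%:C *: Xl i) ((ak i)%:C *: W i + (s i)%:C *: Xk i))
   = al i * ak i + pp i * \sum_(j < D) cRe (Z i j).
  rewrite !cinnerDl !cinnerDr !cinnerZl !cinnerZr !cjR hW eqxx mulr1.
  rewrite (@parseval D W hW (Xl i) (Xk i)).
  rewrite !ReD' !mulrA -!rmorphM !ReRM Rk Rl Re_sum hs.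
  have -> : \sum_(j < D) cRe (cinner (Xl i) (W j) * cinner (W j) (Xk i)) = \sum_(j < D) cRe (Z i j).
    by apply: eq_bigr => j _; rewrite /Z -ReJ' conjM' !cinnerJ mulrC.
  rewrite /=; ring.
have step2 : \sum_(i < D | 0 < pp i) (pp i)^-1 * dpk i * dpl i = \sum_(i < D) 4 * (al i * ak i).
  rewrite big_mkcond /=; apply: eq_bigr => i _; case: ifP => hpi.
    rewrite hdk hdl -[LHS]mulrA [X in _ * X]mulrC !mulrA -[X in X^-1]hs.
    have hs0 : s i != 0 by apply: contraTneq hpi => h; rewrite -hs h mul0r ltxx.
    field; exact: hs0.
  have : pp i = 0 by apply/eqP; rewrite eq_le hp andbT leNgt hpi.
  by move/h0 => [-> ->]; rewrite !mulr0.
have step3 : 4%:R * \sum_(i < D | 0 < pp i) (pp i)%:C * cinner (Xk i) (W i) * cinner (W i) (Xl i)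
    = ((4 : R) * \sum_(i < D) pp i * cRe (Z i i))%:C.
  have e4 : (4%:R : R[i]) = (4 : R)%:C by rewrite rmorph_nat.
  rewrite e4 rmorphM; congr (_ * _); apply: cplxP'; last first.
    by rewrite Im_sum /= big1 // => i _; rewrite -mulrA ImRM; have := ImZ i; rewrite /Z => ->; rewrite mulr0.
  rewrite Re_sum /= big_mkcond; apply: eq_bigr => i _; rewrite -mulrA ReRM.
  case: ifP => // hpi.
  have -> : pp i = 0 by apply/eqP; rewrite eq_le hp andbT leNgt hpi.
  by rewrite mul0r.
have step4 : cRe (\sum_(i < D) \sum_(j < D | (i < j)%N)
          (pp i + pp j)%:C * cinner (Xk i) (W j) * cinner (W j) (Xl i))
   = \sum_(i < D) \sum_(j < D | (i < j)%N) (pp i + pp j) * cRe (Z i j).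
  rewrite Re_sum; apply: eq_bigr => i _; rewrite Re_sum; apply: eq_bigr => j _.
  by rewrite -mulrA ReRM.
rewrite step3 step4 step2 (eq_bigr _ (fun i _ => step1 i)) -!rmorphD; congr (_%:C).
rewrite big_split /= mulrDr mulr_sumr -addrA; congr (_ + _); rewrite -mulrDr; congr (_ * _).
by rewrite addrC -sym_split // => i j; exact: ReZ.
Qed.
End Alg.
Theorem proposition3p6 (R : realType) (p D : nat)
  (Theta : set 'rV[R]_p) (Theta_open : open Theta)
  (psi0 : 'cV[R[i]]_D)
  (Ups : 'I_D -> 'rV[R]_p -> 'M[R[i]]_D)
  (pr : 'I_D -> 'rV[R]_p -> R)
  (w : 'I_D -> 'rV[R]_p -> 'cV[R[i]]_D) :
  (* rho0 = |psi0><psi0| is a pure state *)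
  cinner psi0 psi0 = 1 ->
  (* Kraus operators are differentiable on Theta *)
  (forall i th, Theta th -> mxdifferentiable (Ups i) th) ->
  (* completeness *)
  (forall th, Theta th -> \sum_(i < D) adjmx (Ups i th) *m Ups i th = 1%:M) ->
  (* canonical Kraus operators *)
  (forall j k th, Theta th ->
     \tr (Ups k th *m (psi0 *m adjmx psi0) *m adjmx (Ups j th))
     = ((j == k)%:R * pr k th)%:C) ->
  (* Ups_k |psi0> = sqrt(p_k) |w_k> *)
  (forall k th, Theta th -> Ups k th *m psi0 = (Num.sqrt (pr k th))%:C *: w k th) ->
  (* {w_k} orthonormal basis of C^D, differentiable in theta *)
  (forall j k th, Theta th -> cinner (w j th) (w k th) = (j == k)%:R) ->
  (forall k th, Theta th -> mxdifferentiable (w k) th) ->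
  (* each p_k identically zero or strictly positive on Theta *)
  (forall k, (forall th, Theta th -> pr k th = 0) \/
             (forall th, Theta th -> 0 < pr k th)) ->
  forall th, Theta th -> forall k l : 'I_p,
    let rho0 := psi0 *m adjmx psi0 in
    let dU m i := mxpartial m (Ups i) th in
    let dw m i := mxpartial m (w i) th in
    ((4 : R) * \sum_(i < D)
        complex.Re (\tr (dU k i *m rho0 *m adjmx (dU l i))))%:C
    = (\sum_(i < D | 0 < pr i th)
          (pr i th)^-1 * rpartial k (pr i) th * rpartial l (pr i) th)%:C
      + ((4 : R) * complex.Re (\sum_(i < D) \sum_(j < D | (i < j)%N)
          (pr i th + pr j th)%:C
          * cinner (dw k i) (w j th) * cinner (w j th) (dw l i)))%:C
      + 4%:R * \sum_(i < D | 0 < pr i th)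
          (pr i th)%:C * cinner (dw k i) (w i th) * cinner (w i th) (dw l i).
Proof.
move=> hpsi hUd hcomp htr hUw hwo hwd hp01 th hth k l rho0 dU dw.
have hN : \forall x \near th, Theta x by apply: Theta_open.
pose u i x := Ups i x *m psi0.
pose s i x := complex.Re (cinner (w i x) (u i x)).
have cdU m i a b : cd th (@ebase R p m) (fun x => Ups i x a b).
  by have [h1 h2] := hUd i th hth a b; split; apply: diff_derivable.
have cdW m i a b : cd th (@ebase R p m) (fun x => w i x a b).
  by have [h1 h2] := hwd i th hth a b; split; apply: diff_derivable.
have cDU m i a b : cD th (@ebase R p m) (fun x => Ups i x a b) = dU m i a b.
  by rewrite /dU /mxpartial mxE.
have cDW m i a b : cD th (@ebase R p m) (fun x => w i x a b) = dw m i a b.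
  by rewrite /dw /mxpartial mxE.
have hu m i a : cd th (@ebase R p m) (fun x => u i x a 0) /\
    cD th (@ebase R p m) (fun x => u i x a 0) = (dU m i *m psi0) a 0.
  have e : (fun x => u i x a 0) = (fun x => \sum_(b < D) Ups i x a b * psi0 b 0).
    by apply: funext => x; rewrite /u mxE.
  have hb b : cd th (@ebase R p m) (fun x => Ups i x a b * psi0 b 0) /\
      cD th (@ebase R p m) (fun x => Ups i x a b * psi0 b 0) = dU m i a b * psi0 b 0.
    have [c1 c2] := cdC th (@ebase R p m) (psi0 b 0).
    have [m1 m2] := cdM (cdU m i a b) c1.
    by rewrite m2 c2 mulr0 addr0 cDU.
  have [s1 s2] := cd_sum (fun b x => Ups i x a b * psi0 b 0) (fun b => (hb b).1).
  rewrite e; split => //; rewrite s2 mxE; apply: eq_bigr => b _; exact: (hb b).2.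
have hw m i a : cd th (@ebase R p m) (fun x => w i x a 0) /\
    cD th (@ebase R p m) (fun x => w i x a 0) = dw m i a 0.
  by split; [exact: cdW | exact: cDW].
pose e m := @ebase R p m.
have hcs m i : cd th (e m) (fun x => cinner (w i x) (u i x)) /\
    cD th (e m) (fun x => cinner (w i x) (u i x)) = cinner (dw m i) (u i th) + cinner (w i th) (dU m i *m psi0).
  exact: cd_cinner (hw m i) (hu m i).
have hsd m i : derivable (s i) th (e m) by exact: (hcs m i).1.1.
pose ds m i := 'D_(e m) (s i) th.
have hnear i : \forall x \near th, u i x = (s i x)%:C *: w i x /\ s i x = Num.sqrt (pr i x).
  apply: filterS hN => x hx.
  have hs : s i x = Num.sqrt (pr i x).
    by rewrite /s /u hUw // cinnerZr hwo // eqxx mulr1.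
  by rewrite /u hUw // -hs.
have hdu m i : dU m i *m psi0 = (ds m i)%:C *: w i th + (s i th)%:C *: dw m i.
  apply/matrixP => a b; rewrite (ord1 b) -(hu m i a).2.
  have n1 : \forall x \near th, (s i x)%:C * w i x a 0 = u i x a 0.
    by apply: filterS (hnear i) => x [-> _]; rewrite mxE.
  have [r1 r2] := cdR (hsd m i).
  have [m1 m2] := cdM r1 (hw m i a).1.
  have [c1 c2] := cd_near n1 m1.
  by rewrite c2 m2 r2 (hw m i a).2 !mxE.
have hE m i j : cinner (dw m i) (w j th) + cinner (w i th) (dw m j) = 0.
  have [c1 c2] := cd_cinner (hw m i) (hw m j).
  have n1 : \forall x \near th, (i == j)%:R = cinner (w i x) (w j x).
    by apply: filterS hN => x hx; rewrite hwo.
  have [d1 d2] := cd_near n1 (cdC th (e m) ((i == j)%:R)).1.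
  by rewrite -c2 d2 (cdC th (e m) _).2.
have hpos i x : Theta x -> 0 <= pr i x.
  by move=> hx; case: (hp01 i) => h; [rewrite h | apply: ltW; apply: h].
have hpr m i : rpartial m (pr i) th = 2 * s i th * ds m i.
  have n1 : \forall x \near th, pr i x = s i x * s i x.
    apply: filter_app (hnear i); apply: filterS hN => x hx [_ ->].
    by rewrite -expr2 sqr_sqrtr // hpos.
  rewrite /rpartial -/(e m) (near_eq_derive _ n1) (rdM (hsd m i) (hsd m i)).2 /ds.
  ring.
have h0 m i : pr i th = 0 -> ds m i = 0.
  move=> h.
  have hz x : Theta x -> pr i x = 0.
    case: (hp01 i) => h'; first exact: h'.
    by move=> hx; have := h' th hth; rewrite h ltxx.
  have n1 : \forall x \near th, s i x = 0.
    by apply: filter_app (hnear i); apply: filterS hN => x hx [_ ->]; rewrite hz // sqrtr0.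
  by rewrite /ds (near_eq_derive _ n1) (@rdC _ _ th _ 0).2.
have hL i : cRe (\tr (dU k i *m rho0 *m adjmx (dU l i))) =
   cRe (cinner ((ds l i)%:C *: w i th + (s i th)%:C *: dw l i)
               ((ds k i)%:C *: w i th + (s i th)%:C *: dw k i)).
  by rewrite /rho0 trace_rho !hdu.
rewrite (eq_bigr _ (fun i _ => hL i)).
apply: (@core R D (fun i => pr i th) (fun i => s i th) (ds k) (ds l)
  (fun i => rpartial k (pr i) th) (fun i => rpartial l (pr i) th)
  (fun i => w i th) (dw k) (dw l)).
- by move=> i; exact: hpos.
- move=> i /=; have := (nbhs_singleton (hnear i)).2 => ->.
  by rewrite -expr2 sqr_sqrtr // hpos.
- by move=> i /= h; split; apply: h0.
- by move=> i; apply: hpr.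
- by move=> i; apply: hpr.
- by move=> j j'; apply: hwo.
- by move=> i j; apply: hE.
- by move=> i j; apply: hE.
Qed.
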